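(* Let $L>0$, $g>0$, $\alpha^2>0$ and let $\mathbf G(x,y)=\frac{1}{4\pi}\log\left(\frac{\cos(x/L)-\cosh(y/L)}{\cos(x/L)-\cosh((y-2)/L)}\right)$ on $\mathbb{R}\times(-\infty,1)$. Let $c_1$ be the first component of $\nabla^\perp\bigl(\mathbf G-\Gamma\bigr)(0,0)$, and let \[ \eta_*=-(g-\alpha^2\partial_x^2)^{-1}\left(\chi-\frac{1}{2\pi L}\int_{-\pi L}^{\pi L}\chi\,dx\right),\qquad\chi(x)=c_1\mathbf G_y(x,1)+\tfrac12\mathbf G_y(x,1)^2. \] Then \[ c_1=-\frac{1}{4\pi L}\coth(1/L),\qquad \eta_*(x)=-\frac{1}{4\pi^2}\sum_{n=1}^\infty\frac{n}{gL^2+\alpha^2n^2}e^{-n/L}\cos(nx/L). \]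
   Context: $\Gamma(x,y)=\frac{1}{4\pi}\log(x^2+y^2)$ and $\nabla^\perp f=(-f_y,f_x)$; $\mathbf G-\Gamma$ extends harmonically to $(0,0)$. $(g-\alpha^2\partial_x^2)^{-1}$ acts on $2\pi L$-periodic mean-zero functions as the Fourier multiplier sending $\cos(nx/L)$ to $(g+\alpha^2n^2/L^2)^{-1}\cos(nx/L)$. Here $c_1$ and $\eta_*$ are the leading-order wave speed and surface profile of the small-amplitude $2\pi L$-periodic gravity-capillary waves on infinite depth with a point vortex at $(0,0)$ below the undisturbed surface $y=1$. *)

(* Defs.v *)
From Stdlib Require Import Reals Lra.
From Coquelicot Require Import Coquelicot.
Open Scope R_scope.

Definition Gam (x y : R) : R := / (4 * PI) * ln (x ^ 2 + y ^ 2).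

Definition Gf (L x y : R) : R :=
  / (4 * PI) * ln ((cos (x / L) - cosh (y / L)) / (cos (x / L) - cosh ((y - 2) / L))).

Definition Hext (L x y : R) : R :=
  if Req_EM_T x 0 then
    if Req_EM_T y 0 then real (Lim (fun t => Gf L 0 t - Gam 0 t) 0)
    else Gf L x y - Gam x y
  else Gf L x y - Gam x y.

(* c_1 = first component of grad^perp (G - Gamma)(0,0) = - d/dy (G - Gamma)(0,0). *)
Definition c1_speed (L : R) : R := - Derive (fun y => Hext L 0 y) 0.

Definition Gy1 (L x : R) : R := Derive (fun y => Gf L x y) 1.

Definition chi (L x : R) : R := c1_speed L * Gy1 L x + / 2 * (Gy1 L x) ^ 2.

Definition fcos (L : R) (f : R -> R) (n : nat) : R :=
  / (PI * L) * RInt (fun t => f t * cos (INR n * t / L)) (- PI * L) (PI * L).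
Definition fsin (L : R) (f : R -> R) (n : nat) : R :=
  / (PI * L) * RInt (fun t => f t * sin (INR n * t / L)) (- PI * L) (PI * L).

(* (g - alpha^2 d_x^2)^{-1} on 2 pi L-periodic mean-zero functions, as the
   Fourier multiplier cos(nx/L) |-> (g + alpha^2 n^2/L^2)^{-1} cos(nx/L)
   (and likewise for sin(nx/L)); the n = 0 mode is absent (mean zero). *)
Definition invOp (L g alpha2 : R) (f : R -> R) (x : R) : R :=
  Series (fun n => if Nat.eqb n 0 then 0 else
    (fcos L f n * cos (INR n * x / L) + fsin L f n * sin (INR n * x / L))
    / (g + alpha2 * INR n ^ 2 / L ^ 2)).

Definition eta_star (L g alpha2 : R) (x : R) : R :=
  let m := / (2 * PI * L) * RInt (chi L) (- PI * L) (PI * L) in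
  - invOp L g alpha2 (fun t => chi L t - m) x.

(* Main.v *)
Require Import Defs.
From Stdlib Require Import Reals Lra.
From Coquelicot Require Import Coquelicot.
Open Scope R_scope.

Definition cc L := cosh (1/L).
Definition ss L := sinh (1/L).
Definition PP L t := / (cc L - cos (t / L)).

Lemma E_gt1 L : 0 < L -> 1 < exp (/ L).
Proof. intro. rewrite <- exp_0. apply exp_increasing. apply Rinv_0_lt_compat; auto. Qed.

Lemma cc_E L : cc L = (exp (/L) + / exp (/L)) / 2.
Proof. unfold cc, cosh. rewrite exp_Ropp. unfold Rdiv. rewrite Rmult_1_l. reflexivity. Qed.
Lemma ss_E L : ss L = (exp (/L) - / exp (/L)) / 2.
Proof. unfold ss, sinh. rewrite exp_Ropp. unfold Rdiv. rewrite Rmult_1_l. reflexivity. Qed.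

Lemma cc_gt1 L : 0 < L -> 1 < cc L.
Proof. intro. rewrite cc_E. pose proof (E_gt1 L H). set (E := exp (/L)) in *.
  assert (0 < E) by lra. apply Rminus_gt_0_lt.
  replace ((E + / E) / 2 - 1) with ((E - 1)^2 / (2 * E)) by (field; lra).
  apply Rdiv_lt_0_compat. apply pow_lt. lra. lra. Qed.
Lemma ss_pos L : 0 < L -> 0 < ss L.
Proof. intro. rewrite ss_E. pose proof (E_gt1 L H). set (E := exp (/L)) in *.
  assert (0 < E) by lra.
  replace ((E - / E) / 2) with ((E - 1) * (E + 1) / (2 * E)) by (field; lra).
  apply Rdiv_lt_0_compat. apply Rmult_lt_0_compat; lra. lra. Qed.

Lemma cc_cos_pos L t : 0 < L -> 0 < cc L - cos (t / L).
Proof. intro. pose proof (cc_gt1 L H). pose proof (COS_bound (t/L)). lra. Qed.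

Lemma Gy1_eq L x : 0 < L -> Gy1 L x = ss L / (2 * PI * L) * PP L x.
Proof.
  intro HL. unfold Gy1, Gf. apply is_derive_unique.
  pose proof (cc_cos_pos L x HL) as Hp. rewrite cc_E in Hp.
  pose proof (E_gt1 L HL) as HE.
  pose proof (COS_bound (x/L)) as Hcb.
  unfold PP. rewrite cc_E, ss_E.
  assert (e1 : (1 + - (2)) * / L = - / L) by (field; lra).
  assert (e2 : 1 * / L = / L) by (field; lra).
  unfold cosh. auto_derive.
  - rewrite e1, e2, Ropp_involutive, exp_Ropp. set (E := exp (/L)) in *.
    assert (Hn : cos (x / L) + - ((/ E + E) * / 2) <> 0) by (intro; lra).
    split; [exact Hn|split; auto].
    replace ((cos (x / L) + - ((E + / E) * / 2)) * / (cos (x / L) + - ((/ E + E) * / 2))) with 1 by (field; split; [lra| intro; nra]). lra.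
  - rewrite e1, e2, Ropp_involutive, exp_Ropp. set (E := exp (/L)) in *.
    pose proof PI_RGT_0.
    assert (Hn : cos (x / L) + - ((/ E + E) * / 2) <> 0) by (intro; lra).
    assert (Hn2 : cos (x / L) + - ((E + / E) * / 2) <> 0) by (intro; lra).
    field. repeat split; try lra; intro; nra.
Qed.

Lemma ln_le_xm1 x : 0 < x -> ln x <= x - 1.
Proof. intro. pose proof (exp_ineq1_le (ln x)). rewrite exp_ln in H0; auto. lra. Qed.

Lemma nonneg_deriv f df : f 0 = 0 -> (forall x, is_derive f x (df x)) ->
  (forall x, 0 <= x -> 0 <= df x) -> forall x, 0 <= x -> 0 <= f x.
Proof.
  intros H0 Hd Hp x Hx.
  destruct (MVT_gen f 0 x df) as [c [Hc Hm]].
  - intros; apply Hd.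
  - intros. apply derivable_continuous_pt. exists (df x0). apply is_derive_Reals. apply Hd.
  - rewrite Rmin_left in Hc by auto. rewrite H0 in Hm.
    assert (0 <= df c * (x - 0)) by (apply Rmult_le_pos; [apply Hp; lra | lra]). lra.
Qed.

Lemma cosh_ge1 u : 1 <= cosh u.
Proof. unfold cosh. pose proof (exp_pos u). rewrite exp_Ropp. set (E := exp u) in *.
  apply Rminus_le_0. replace ((E + / E) / 2 - 1) with ((E - 1)^2 / (2 * E)) by (field; lra).
  apply Rmult_le_pos. apply pow2_ge_0. left. apply Rinv_0_lt_compat. lra. Qed.

Lemma cosh_neg u : cosh (- u) = cosh u.
Proof. unfold cosh. rewrite Ropp_involutive. lra. Qed.

Lemma g1_nn u : 0 <= u -> u <= sinh u.
Proof. intro H. cut (0 <= sinh u - u). lra.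
  apply (nonneg_deriv (fun u => sinh u - u) (fun u => cosh u - 1)); auto.
  - unfold sinh. rewrite Ropp_0, exp_0. lra.
  - intro x. unfold sinh, cosh. auto_derive; auto. field.
  - intros. pose proof (cosh_ge1 x). lra. Qed.

Lemma g2_nn u : 0 <= u -> u^2/2 <= cosh u - 1.
Proof. intro H. cut (0 <= cosh u - 1 - u^2/2). lra.
  apply (nonneg_deriv (fun u => cosh u - 1 - u^2/2) (fun u => sinh u - u)); auto.
  - unfold cosh. rewrite Ropp_0, exp_0. lra.
  - intro x. unfold sinh, cosh. auto_derive; auto. field.
  - intros. pose proof (g1_nn x H0). lra. Qed.

Lemma g4_nn u : 0 <= u -> sinh u <= u * cosh u.
Proof. intro H. cut (0 <= u * cosh u - sinh u). lra.
  apply (nonneg_deriv (fun u => u * cosh u - sinh u) (fun u => u * sinh u)); auto.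
  - unfold sinh. rewrite Ropp_0, exp_0. lra.
  - intro x. unfold sinh, cosh. auto_derive; auto. field.
  - intros. pose proof (g1_nn x H0). apply Rmult_le_pos; lra. Qed.

Lemma g3_nn u : 0 <= u -> cosh u - 1 <= u^2/2 * cosh u.
Proof. intro H. cut (0 <= u^2/2 * cosh u - cosh u + 1). lra.
  apply (nonneg_deriv (fun u => u^2/2 * cosh u - cosh u + 1)
     (fun u => (u * cosh u - sinh u) + u^2/2 * sinh u)); auto.
  - unfold cosh. rewrite Ropp_0, exp_0. lra.
  - intro x. unfold sinh, cosh. auto_derive; auto. field.
  - intros. pose proof (g1_nn x H0). pose proof (g4_nn x H0).
    assert (0 <= x^2/2 * sinh x) by (apply Rmult_le_pos; [pose proof (pow2_ge_0 x); lra | lra]). lra. Qed.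

Lemma cosh_bounds u : u^2/2 <= cosh u - 1 <= u^2/2 * cosh u.
Proof. destruct (Rle_dec 0 u).
  - split; [apply g2_nn | apply g3_nn]; auto.
  - rewrite <- (cosh_neg u). replace (u^2) with ((-u)^2) by ring.
    split; [apply g2_nn | apply g3_nn]; lra. Qed.

Lemma cosh_le3 u : Rabs u <= 1 -> cosh u <= 3.
Proof. intro H. pose proof exp_le_3. unfold cosh.
  assert (exp u <= exp 1). { destruct (Rle_lt_or_eq_dec u 1) as [h|h]. apply Rabs_le_between in H; lra. left; apply exp_increasing; auto. subst; lra. }
  assert (exp (-u) <= exp 1). { destruct (Rle_lt_or_eq_dec (-u) 1) as [h|h]. apply Rabs_le_between in H; lra. left; apply exp_increasing; auto. rewrite h; lra. }
  lra. Qed.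

Definition phi L y := (cosh (y/L) - 1) / y^2.
Definition A0 L := ln (/(2*L^2)).
Definition Ap L y := if Req_EM_T y 0 then /(4*PI) * A0 L else /(4*PI) * ln (phi L y).
Definition Bf L y := /(4*PI) * ln (cosh ((y-2)/L) - 1).

Lemma Ap_bound L y : 0 < L -> Rabs y <= L -> Rabs (Ap L y - Ap L 0) <= 3/(8*PI*L^2) * y^2.
Proof.
  intros HL Hy. pose proof PI_RGT_0. unfold Ap.
  destruct (Req_EM_T 0 0) as [_|n]; [|congruence].
  destruct (Req_EM_T y 0) as [e|n].
  - subst. rewrite Rminus_diag, Rabs_R0. assert (0 <= 3/(8*PI*L^2)). { apply Rlt_le, Rdiv_lt_0_compat; [lra|]. apply Rmult_lt_0_compat; [lra| apply pow_lt; lra]. } nra.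
  - set (u := y / L).
    assert (Hy2 : y = u * L) by (unfold u; field; lra).
    assert (Hu : Rabs u <= 1). { unfold u. unfold Rdiv. rewrite Rabs_mult, Rabs_inv, (Rabs_right L) by lra.
      apply (Rmult_le_reg_r L); auto. field_simplify; lra. }
    assert (Hu0 : u <> 0). { intro h. apply n. rewrite Hy2, h. ring. }
    assert (Hu2 : 0 < u^2) by (pose proof (Rsqr_pos_lt u Hu0); unfold Rsqr in *; simpl; lra).
    pose proof (cosh_bounds u) as [Hb1 Hb2].
    pose proof (cosh_le3 u Hu) as Hc3.
    set (X := (cosh u - 1) * 2 / u^2).
    assert (HX1 : 1 <= X). { unfold X. apply (Rmult_le_reg_r (u^2)); auto. field_simplify; lra. }
    assert (HX2 : X <= cosh u). { unfold X. apply (Rmult_le_reg_r (u^2)); auto. field_simplify; lra. }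
    assert (Hph : phi L y = X * / (2 * L^2)). { unfold phi, X. fold u. rewrite Hy2. field. split; lra. }
    assert (HL2 : 0 < / (2 * L^2)) by (apply Rinv_0_lt_compat; nra).
    rewrite Hph. unfold A0. rewrite ln_mult by lra.
    replace (/ (4 * PI) * (ln X + ln (/ (2 * L ^ 2))) - / (4 * PI) * ln (/ (2 * L ^ 2))) with (/ (4*PI) * ln X) by ring.
    pose proof (ln_le 1 X Rlt_0_1 HX1) as Hl1. rewrite ln_1 in Hl1.
    pose proof (ln_le_xm1 X ltac:(lra)) as Hl2.
    assert (Hpi : 0 < / (4 * PI)) by (apply Rinv_0_lt_compat; lra).
    rewrite Rabs_right by (apply Rle_ge, Rmult_le_pos; lra).
    assert (ln X <= 3/2 * u^2) by nra.
    rewrite Hy2. apply Rle_trans with (/ (4*PI) * (3/2 * u^2)). apply Rmult_le_compat_l; lra.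
    right. field. lra.
Qed.

Lemma Ap_deriv L : 0 < L -> is_derive (Ap L) 0 0.
Proof.
  intro HL. apply is_derive_Reals. intros eps Heps.
  pose proof PI_RGT_0.
  set (K := 3/(8*PI*L^2)).
  assert (HK : 0 < K). { unfold K. apply Rdiv_lt_0_compat; [lra|]. apply Rmult_lt_0_compat; [lra| apply pow_lt; lra]. }
  assert (Hd : 0 < Rmin L (eps / K)) by (apply Rmin_pos; [lra| apply Rdiv_lt_0_compat; lra]).
  exists (mkposreal _ Hd). intros h Hh0 Hh. simpl in Hh.
  rewrite Rplus_0_l, Rminus_0_r.
  pose proof (Rmin_l L (eps/K)). pose proof (Rmin_r L (eps/K)).
  pose proof (Ap_bound L h HL ltac:(lra)) as Hb. fold K in Hb.
  unfold Rdiv. rewrite Rabs_mult, Rabs_inv.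
  assert (Hah : 0 < Rabs h) by (apply Rabs_pos_lt; auto).
  apply (Rmult_lt_reg_r (Rabs h)); auto. rewrite Rmult_assoc, Rinv_l, Rmult_1_r by lra.
  apply Rle_lt_trans with (K * h^2); auto.
  replace (h^2) with (Rabs h * Rabs h) by (rewrite <- Rabs_mult; simpl; rewrite Rmult_1_r; apply Rabs_right; apply Rle_ge, Rle_0_sqr).
  rewrite <- Rmult_assoc. apply Rmult_lt_compat_r; auto.
  assert (Rabs h < eps / K) by lra.
  apply (Rmult_lt_compat_l K) in H2; auto. unfold Rdiv in H2. rewrite <- Rmult_assoc, (Rmult_comm K eps), Rmult_assoc, Rinv_r, Rmult_1_r in H2; lra.
Qed.

Lemma cosh_gt1 v : v <> 0 -> 1 < cosh v.
Proof. intro. pose proof (cosh_bounds v) as [h _].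
  assert (0 < v^2) by (pose proof (Rsqr_pos_lt v H); unfold Rsqr in *; simpl; lra). lra. Qed.

Lemma Bf_deriv L : 0 < L -> is_derive (Bf L) 0 (- (/ (4 * PI * L) * (cosh (1 / L) / sinh (1 / L)))).
Proof.
  intro HL. pose proof PI_RGT_0.
  assert (H2 : 1 < cosh ((0-2)/L)) by (apply cosh_gt1; intro h; unfold Rdiv in h; apply Rmult_integral in h; destruct h as [h|h]; [lra| apply Rinv_neq_0_compat in h; lra]).
  unfold Bf. unfold cosh, sinh in *. auto_derive.
  - replace ((0 + - (2)) * / L) with ((0 - 2) / L) by (unfold Rdiv; ring). lra.
  - assert (e1 : (0 + - (2)) * / L = - (/L) + - (/L)) by (field; lra).
    assert (e2 : 1 / L = / L) by (field; lra).
    rewrite e1, e2. rewrite Ropp_plus_distr, !Ropp_involutive, !exp_plus, !exp_Ropp.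
    assert (E1 : 1 < exp (/L)) by (rewrite <- exp_0; apply exp_increasing; apply Rinv_0_lt_compat; lra).
    set (E := exp (/L)) in *.
    field. repeat split; try lra; try (intro; nra).
    intro h. assert (1 < E*E) by nra. nra.
Qed.

Lemma agree L y : 0 < L -> y <> 0 -> Rabs y < 1 -> Gf L 0 y - Gam 0 y = Ap L y - Bf L y.
Proof.
  intros HL Hy0 Hy1. pose proof PI_RGT_0.
  assert (Ha : 1 < cosh (y/L)) by (apply cosh_gt1; intro h; unfold Rdiv in h; apply Rmult_integral in h; destruct h as [h|h]; [lra| apply Rinv_neq_0_compat in h; lra]).
  assert (Hb : 1 < cosh ((y-2)/L)) by (apply cosh_gt1; intro h; unfold Rdiv in h; apply Rmult_integral in h; destruct h as [h|h]; [apply Rabs_def2 in Hy1; lra| apply Rinv_neq_0_compat in h; lra]).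
  assert (Hy2 : 0 < y^2) by (pose proof (Rsqr_pos_lt y Hy0); unfold Rsqr in *; simpl; lra).
  unfold Gf, Gam, Ap, Bf, phi.
  destruct (Req_EM_T y 0) as [e|_]; [congruence|].
  replace (0 / L) with 0 by (field; lra). rewrite cos_0.
  replace ((1 - cosh (y / L)) / (1 - cosh ((y - 2) / L))) with ((cosh (y / L) - 1) / (cosh ((y - 2) / L) - 1)) by (field; lra).
  replace (0^2 + y^2) with (y^2) by ring.
  rewrite !ln_div by lra. ring.
Qed.

Definition Hf L y := Ap L y - Bf L y.

Lemma Hf_deriv L : 0 < L -> is_derive (Hf L) 0 (/ (4 * PI * L) * (cosh (1 / L) / sinh (1 / L))).
Proof.
  intro HL. unfold Hf. apply is_derive_Reals.
  replace (/ (4 * PI * L) * (cosh (1 / L) / sinh (1 / L))) with (0 - (- (/ (4 * PI * L) * (cosh (1 / L) / sinh (1 / L))))) by ring.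
  apply (derivable_pt_lim_minus (Ap L) (Bf L)); apply is_derive_Reals.
  apply Ap_deriv; auto. apply Bf_deriv; auto.
Qed.

Lemma Lim_val L : 0 < L -> real (Lim (fun t => Gf L 0 t - Gam 0 t) 0) = Hf L 0.
Proof.
  intro HL.
  assert (Hc : continuous (Hf L) 0) by exact (@ex_derive_continuous R_AbsRing R_NormedModule (Hf L) 0 (ex_intro _ _ (Hf_deriv L HL))).
  assert (Hl : is_lim (Hf L) 0 (Hf L 0)) by exact (is_lim_comp_continuous (fun y => y) (Hf L) 0 0 (is_lim_id 0) Hc).
  assert (Hl2 : is_lim (fun t => Gf L 0 t - Gam 0 t) 0 (Hf L 0)).
  { apply (is_lim_ext_loc (Hf L)); auto.
    exists (mkposreal 1 Rlt_0_1). intros y Hy Hne. unfold ball in Hy; simpl in Hy.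
    unfold AbsRing_ball, abs, minus, plus, opp in Hy; simpl in Hy. rewrite Ropp_0, Rplus_0_r in Hy.
    unfold Hf. rewrite agree; auto. }
  rewrite (is_lim_unique _ _ _ Hl2). reflexivity.
Qed.

Lemma Hext_deriv L : 0 < L -> is_derive (fun y => Hext L 0 y) 0 (/ (4 * PI * L) * (cosh (1 / L) / sinh (1 / L))).
Proof.
  intro HL. apply (is_derive_ext_loc (Hf L)); [| apply Hf_deriv; auto].
  exists (mkposreal 1 Rlt_0_1). intros y Hy. unfold ball in Hy; simpl in Hy.
  unfold AbsRing_ball, abs, minus, plus, opp in Hy; simpl in Hy. rewrite Ropp_0, Rplus_0_r in Hy.
  unfold Hext. destruct (Req_EM_T 0 0) as [_|n]; [|congruence].
  destruct (Req_EM_T y 0) as [e|n].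
  - subst. rewrite Lim_val; auto.
  - unfold Hf. rewrite agree; auto.
Qed.

Lemma cont_of_deriv (f : R -> R) x : ex_derive f x -> continuous f x.
Proof. exact (@ex_derive_continuous R_AbsRing R_NormedModule f x). Qed.

Lemma cont_mult (f g : R -> R) x : continuous f x -> continuous g x -> continuous (fun y => f y * g y) x.
Proof. intros. exact (@continuous_mult R_UniformSpace R_AbsRing f g x H H0). Qed.

Lemma cosn_cont L n t : continuous (fun t => cos (INR n * t / L)) t.
Proof. apply cont_of_deriv. auto_derive. auto. Qed.
Lemma sinn_cont L n t : continuous (fun t => sin (INR n * t / L)) t.
Proof. apply cont_of_deriv. auto_derive. auto. Qed.

Lemma PP_cont L t : 0 < L -> continuous (PP L) t.
Proof. intro HL. apply cont_of_deriv. unfold PP. pose proof (cc_cos_pos L t HL). auto_derive. lra. Qed.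

Definition W L (w : R -> R) n := RInt (fun t => w t * cos (INR n * t / L)) (- PI * L) (PI * L).

Lemma exW L (w : R -> R) n a b : (forall t, continuous w t) -> ex_RInt (fun t => w t * cos (INR n * t / L)) a b.
Proof. intros. apply (@ex_RInt_continuous R_CompleteNormedModule). intros. apply cont_mult; auto. apply cosn_cont. Qed.

Lemma trig_rec L n t : cos (t / L) * cos (INR (S n) * t / L) = (cos (INR (S (S n)) * t / L) + cos (INR n * t / L)) / 2.
Proof.
  intros. assert (Lz : L <> 0 \/ L = 0) by (destruct (Req_dec L 0); auto).
  replace (INR (S (S n)) * t / L) with (INR (S n) * t / L + t / L) by (rewrite (S_INR (S n)); unfold Rdiv; ring).
  replace (INR n * t / L) with (INR (S n) * t / L - t / L) by (rewrite (S_INR n); unfold Rdiv; ring).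
  rewrite cos_plus, cos_minus. field.
Qed.

Lemma rec_gen L (w : R -> R) c n : (forall t, continuous w t) ->
  RInt (fun t => w t * (c - cos (t / L)) * cos (INR (S n) * t / L)) (- PI * L) (PI * L)
  = c * W L w (S n) - (W L w (S (S n)) + W L w n) / 2.
Proof.
  intro Hw. unfold W.
  rewrite (RInt_ext _ (fun t => minus (scal c (w t * cos (INR (S n) * t / L)))
      (scal (/2) (plus (w t * cos (INR (S (S n)) * t / L)) (w t * cos (INR n * t / L)))))).
  2:{ intros x _. rewrite (Rmult_assoc (w x)), Rmult_minus_distr_r, trig_rec.
      unfold minus, plus, scal, opp; simpl; unfold mult; simpl. field. }
  rewrite (@RInt_minus R_CompleteNormedModule), (@RInt_scal R_CompleteNormedModule), (@RInt_scal R_CompleteNormedModule), (@RInt_plus R_CompleteNormedModule).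
  - unfold minus, plus, scal, opp; simpl; unfold mult; simpl. field.
  - apply exW; auto.
  - apply exW; auto.
  - apply (@ex_RInt_plus R_CompleteNormedModule); apply exW; auto.
  - apply exW; auto.
  - apply (@ex_RInt_scal R_CompleteNormedModule); apply exW; auto.
  - apply (@ex_RInt_scal R_CompleteNormedModule); apply (@ex_RInt_plus R_CompleteNormedModule); apply exW; auto.
Qed.

Lemma rec_gen0 L (w : R -> R) c : (forall t, continuous w t) ->
  RInt (fun t => w t * (c - cos (t / L)) * cos (INR 0 * t / L)) (- PI * L) (PI * L)
  = c * W L w 0 - W L w 1.
Proof.
  intro Hw. unfold W.
  rewrite (RInt_ext _ (fun t => minus (scal c (w t * cos (INR 0 * t / L))) (w t * cos (INR 1 * t / L)))).
  2:{ intros x _. unfold minus, plus, scal, opp; simpl; unfold mult; simpl.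
      replace (0 * x / L) with 0 by (unfold Rdiv; ring). replace (1 * x / L) with (x / L) by (unfold Rdiv; ring).
      rewrite cos_0. ring. }
  rewrite (@RInt_minus R_CompleteNormedModule), (@RInt_scal R_CompleteNormedModule).
  - unfold minus, plus, scal, opp; simpl; unfold mult; simpl. ring.
  - apply exW; auto.
  - apply (@ex_RInt_scal R_CompleteNormedModule); apply exW; auto.
  - apply exW; auto.
Qed.

Lemma geom_unb r D M : 1 < r -> (forall n, Rabs (r ^ n * D) <= M) -> D = 0.
Proof.
  intros Hr HM. destruct (Req_dec D 0) as [h|h]; auto. exfalso.
  assert (Hd : 0 < Rabs D) by (apply Rabs_pos_lt; auto).
  destruct (Pow_x_infinity r ltac:(rewrite Rabs_right; lra) (M / Rabs D + 1)) as [N HN].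
  specialize (HN N (Nat.le_refl N)). specialize (HM N).
  rewrite Rabs_mult in HM.
  assert (Rabs (r^N) * Rabs D >= (M / Rabs D + 1) * Rabs D) by (apply Rmult_ge_compat_r; lra).
  replace ((M / Rabs D + 1) * Rabs D) with (M + Rabs D) in H by (field; lra). lra.
Qed.

Lemma seq_geom c s (I : nat -> R) M : c * c - s * s = 1 -> 0 < s -> 0 < c ->
  (forall n, c * I (S n) - (I (S (S n)) + I n) / 2 = 0) ->
  (forall n, Rabs (I n) <= M) -> forall n, I n = (c - s) ^ n * I 0%nat.
Proof.
  intros Hcs Hs Hc Hrec HM.
  set (q := c - s). set (r := c + s).
  assert (Hqr : q * r = 1) by (unfold q, r; lra).
  assert (Hc1 : 1 < c) by nra.
  assert (Hr : 1 < r) by (unfold r; lra).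
  assert (Hq : 0 < q) by nra.
  set (D := fun n => I (S n) - q * I n).
  assert (HD : forall n, D n = r ^ n * D 0%nat).
  { induction n. simpl; ring.
    assert (D (S n) = r * D n). { unfold D. specialize (Hrec n).
      assert (I (S (S n)) = 2 * c * I (S n) - I n) by lra. rewrite H.
      replace (2 * c) with (q + r) by (unfold q, r; ring).
      replace (I n) with (q * r * I n) at 1 by (rewrite Hqr; ring). ring. }
    rewrite H, IHn. simpl. ring. }
  assert (HD0 : D 0%nat = 0).
  { apply (geom_unb r (D 0%nat) ((1 + q) * M)); auto. intro n. rewrite <- HD. unfold D.
    pose proof (HM (S n)). pose proof (HM n).
    eapply Rle_trans. apply Rabs_triang. rewrite Rabs_Ropp, Rabs_mult, (Rabs_right q) by lra. nra. }
  intro n. induction n. simpl; ring.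
  assert (D n = 0) by (rewrite HD, HD0; ring). unfold D in H.
  simpl. rewrite Rmult_assoc, <- IHn. lra.
Qed.

Lemma bernoulli r n : 1 <= r -> 1 + INR n * (r - 1) <= r ^ n.
Proof. intro H. induction n. simpl; lra. rewrite S_INR. simpl.
  assert (0 <= r ^ n) by (apply pow_le; lra). pose proof (pos_INR n).
  assert (0 <= INR n * ((r-1)*(r-1))) by (apply Rmult_le_pos; nra). nra. Qed.

Lemma npow_bound q n : 0 < q < 1 -> INR n * q ^ n <= q / (1 - q).
Proof.
  intro H. set (r := / q). assert (Hr : 1 < r) by (unfold r; rewrite <- Rinv_1; apply Rinv_lt_contravar; lra).
  pose proof (bernoulli r n ltac:(lra)).
  assert (Hqn : q ^ n = / r ^ n) by (unfold r; rewrite pow_inv, Rinv_inv; auto).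
  assert (0 < r ^ n) by (apply pow_lt; lra).
  rewrite Hqn. assert (q / (1 - q) = / (r - 1)) by (unfold r; field; lra). rewrite H2.
  pose proof (pos_INR n).
  apply (Rmult_le_reg_r (r ^ n)); auto. rewrite Rmult_assoc, Rinv_l by lra.
  apply (Rmult_le_reg_r (r - 1)); [lra|]. field_simplify; try lra.
Qed.

Lemma cosint0 L : RInt (fun t => cos (INR 0 * t / L)) (- PI * L) (PI * L) = 2 * PI * L.
Proof.
  rewrite (RInt_ext _ (fun _ => 1)). rewrite (@RInt_const R_CompleteNormedModule).
  unfold scal; simpl; unfold mult; simpl. ring.
  intros. replace (INR 0 * x / L) with 0 by (simpl; unfold Rdiv; ring). apply cos_0.
Qed.

Lemma sin_nPI n : sin (INR n * PI) = 0.
Proof. apply sin_eq_0_1. exists (Z.of_nat n). rewrite INR_IZR_INZ. reflexivity. Qed.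

Lemma antider L k x : 0 < L -> k <> 0 -> is_derive (fun t => L / k * sin (k * t / L)) x (cos (k * x / L)).
Proof. intros. auto_derive. auto. unfold Rdiv. field. lra. Qed.

Lemma cosintS L n : 0 < L -> RInt (fun t => cos (INR (S n) * t / L)) (- PI * L) (PI * L) = 0.
Proof.
  intro HL. pose proof (pos_INR n). assert (Hn : 0 < INR (S n)) by (rewrite S_INR; lra).
  apply (@is_RInt_unique R_CompleteNormedModule).
  replace 0 with (minus (L / INR (S n) * sin (INR (S n) * (PI * L) / L)) (L / INR (S n) * sin (INR (S n) * (- PI * L) / L))).
  apply (@is_RInt_derive R_CompleteNormedModule (fun t => L / INR (S n) * sin (INR (S n) * t / L))).
  - intros. apply antider; lra.
  - intros. apply cosn_cont.
  - replace (INR (S n) * (PI * L) / L) with (INR (S n) * PI) by (field; lra).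
    replace (INR (S n) * (- PI * L) / L) with (- (INR (S n) * PI)) by (field; lra).
    rewrite sin_neg, sin_nPI. unfold minus, plus, opp; simpl. ring.
Qed.

Lemma cc_ss L : cc L * cc L - ss L * ss L = 1.
Proof. rewrite cc_E, ss_E. pose proof (exp_pos (/L)). field. lra. Qed.

Lemma q_E L : cc L - ss L = / exp (/L).
Proof. rewrite cc_E, ss_E. pose proof (exp_pos (/L)). field. lra. Qed.

Definition Iseq L n := W L (PP L) n.
Definition Jseq L n := W L (fun t => PP L t ^ 2) n.

Lemma PP_pos L t : 0 < L -> 0 < PP L t.
Proof. intro. unfold PP. apply Rinv_0_lt_compat. apply cc_cos_pos; auto. Qed.

Lemma PP_le L t : 0 < L -> PP L t <= / (cc L - 1).
Proof. intro. unfold PP. pose proof (cc_gt1 L H). pose proof (COS_bound (t/L)).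
  apply Rinv_le_contravar; lra. Qed.

Lemma PP2_cont L t : 0 < L -> continuous (fun t => PP L t ^ 2) t.
Proof. intro. apply (continuous_ext (fun t => PP L t * PP L t)). intro; simpl; ring.
  apply cont_mult; apply PP_cont; auto. Qed.

Lemma I_bound L n : 0 < L -> Rabs (Iseq L n) <= (PI * L - - PI * L) * / (cc L - 1).
Proof. intro HL. pose proof PI_RGT_0. unfold Iseq, W. apply abs_RInt_le_const.
  - nra.
  - apply exW. intro; apply PP_cont; auto.
  - intros. rewrite Rabs_mult. pose proof (PP_pos L t HL). pose proof (PP_le L t HL).
    rewrite Rabs_right by lra. pose proof (COS_bound (INR n * t / L)).
    assert (Rabs (cos (INR n * t / L)) <= 1) by (apply Rabs_le; lra). nra.
Qed.

Lemma J_bound L n : 0 < L -> Rabs (Jseq L n) <= (PI * L - - PI * L) * (/ (cc L - 1))^2.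
Proof. intro HL. pose proof PI_RGT_0. unfold Jseq, W. apply abs_RInt_le_const.
  - nra.
  - apply exW. intro; apply PP2_cont; auto.
  - intros. rewrite Rabs_mult. pose proof (PP_pos L t HL). pose proof (PP_le L t HL).
    rewrite Rabs_right by (apply Rle_ge, pow_le; lra). pose proof (COS_bound (INR n * t / L)).
    assert (Rabs (cos (INR n * t / L)) <= 1) by (apply Rabs_le; lra).
    assert (PP L t ^ 2 <= (/ (cc L - 1))^2) by (apply pow_incr; lra).
    assert (0 <= PP L t ^ 2) by (apply pow_le; lra). nra.
Qed.

Lemma I_rec L n : 0 < L -> cc L * Iseq L (S n) - (Iseq L (S (S n)) + Iseq L n) / 2 = 0.
Proof.
  intro HL. unfold Iseq. rewrite <- rec_gen by (intro; apply PP_cont; auto).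
  rewrite <- (cosintS L n HL). apply RInt_ext. intros. unfold PP. match goal with |- ?a = ?b => change (@eq R a b) end.
  pose proof (cc_cos_pos L x HL). field. lra.
Qed.

Lemma I_rec0 L : 0 < L -> cc L * Iseq L 0 - Iseq L 1 = 2 * PI * L.
Proof.
  intro HL. unfold Iseq. rewrite <- rec_gen0 by (intro; apply PP_cont; auto).
  rewrite <- (cosint0 L). apply RInt_ext. intros. unfold PP. match goal with |- ?a = ?b => change (@eq R a b) end.
  pose proof (cc_cos_pos L x HL). field. lra.
Qed.

Lemma J_rec L n : 0 < L -> cc L * Jseq L (S n) - (Jseq L (S (S n)) + Jseq L n) / 2 = Iseq L (S n).
Proof.
  intro HL. unfold Jseq. rewrite <- rec_gen by (intro; apply PP2_cont; auto).
  unfold Iseq, W. apply RInt_ext. intros. unfold PP. match goal with |- ?a = ?b => change (@eq R a b) end.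
  pose proof (cc_cos_pos L x HL). field. lra.
Qed.

Lemma J_rec0 L : 0 < L -> cc L * Jseq L 0 - Jseq L 1 = Iseq L 0.
Proof.
  intro HL. unfold Jseq. rewrite <- rec_gen0 by (intro; apply PP2_cont; auto).
  unfold Iseq, W. apply RInt_ext. intros. unfold PP. match goal with |- ?a = ?b => change (@eq R a b) end.
  pose proof (cc_cos_pos L x HL). field. lra.
Qed.

Lemma I_val L n : 0 < L -> Iseq L n = (/ exp (/ L)) ^ n * (2 * PI * L / ss L).
Proof.
  intro HL. pose proof (cc_gt1 L HL). pose proof (ss_pos L HL).
  assert (Hg := seq_geom (cc L) (ss L) (Iseq L) _ (cc_ss L) H0 ltac:(lra) (fun n => I_rec L n HL) (fun n => I_bound L n HL)).
  rewrite Hg, q_E. f_equal.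
  pose proof (I_rec0 L HL). rewrite (Hg 1%nat) in H1. simpl in H1.
  apply (Rmult_eq_reg_l (ss L)); [|lra]. field_simplify; [|lra]. lra.
Qed.

Definition pJ L n := 2 * PI * L * (/ exp (/ L)) ^ n * (INR n + cc L / ss L) / ss L ^ 2.

Lemma pJ_rec L n : 0 < L -> cc L * pJ L (S n) - (pJ L (S (S n)) + pJ L n) / 2 = (/ exp (/ L)) ^ (S n) * (2 * PI * L / ss L).
Proof.
  intro HL. pose proof (E_gt1 L HL). pose proof (ss_pos L HL). unfold pJ.
  rewrite <- !tech_pow_Rmult. rewrite !S_INR. rewrite ss_E in *. rewrite cc_E.
  set (E := exp (/L)) in *. set (Q := (/ E) ^ n).
  field. split; [lra|]. intro h. nra.
Qed.

Lemma pJ_rec0 L : 0 < L -> cc L * pJ L 0 - pJ L 1 = 2 * PI * L / ss L.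
Proof.
  intro HL. pose proof (E_gt1 L HL). pose proof (ss_pos L HL). unfold pJ.
  simpl pow. simpl INR. rewrite ss_E in *. rewrite cc_E.
  set (E := exp (/L)) in *.
  field. split; [lra|]. intro h. nra.
Qed.

Lemma J_val L n : 0 < L -> Jseq L n = pJ L n.
Proof.
  intro HL. pose proof (cc_gt1 L HL) as Hc. pose proof (ss_pos L HL) as Hs.
  pose proof (E_gt1 L HL) as HE.
  set (q := / exp (/ L)).
  assert (Hq : 0 < q < 1). { unfold q. split. apply Rinv_0_lt_compat; lra.
    rewrite <- Rinv_1. apply Rinv_lt_contravar; lra. }
  set (Ee := fun m => Jseq L m - pJ L m).
  assert (Hrec : forall m, cc L * Ee (S m) - (Ee (S (S m)) + Ee m) / 2 = 0).
  { intro m. unfold Ee. pose proof (J_rec L m HL). pose proof (pJ_rec L m HL). rewrite I_val in H by auto. lra. }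
  set (M := (PI * L - - PI * L) * (/ (cc L - 1))^2 + 2 * PI * L * (q / (1 - q) + cc L / ss L) / ss L ^ 2).
  assert (Hb : forall m, Rabs (Ee m) <= M).
  { intro m. unfold Ee, M. eapply Rle_trans. apply Rabs_triang. rewrite Rabs_Ropp.
    apply Rplus_le_compat. apply J_bound; auto.
    unfold pJ. fold q. pose proof PI_RGT_0. pose proof (pos_INR m).
    assert (0 < q ^ m) by (apply pow_lt; lra).
    assert (q ^ m <= 1) by (rewrite <- (pow1 m); apply pow_incr; lra).
    assert (INR m * q ^ m <= q / (1 - q)) by (apply npow_bound; auto).
    assert (0 < cc L / ss L) by (apply Rdiv_lt_0_compat; lra).
    assert (0 < ss L ^ 2) by (apply pow_lt; lra).
    rewrite Rabs_right.
    - unfold Rdiv. apply Rmult_le_compat_r. left; apply Rinv_0_lt_compat; lra.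
      rewrite Rmult_assoc. apply Rmult_le_compat_l. nra. nra.
    - apply Rle_ge. apply Rmult_le_pos; [|left; apply Rinv_0_lt_compat; lra]. apply Rmult_le_pos. apply Rmult_le_pos; nra. nra. }
  assert (Hg := seq_geom (cc L) (ss L) Ee M (cc_ss L) Hs ltac:(lra) Hrec Hb).
  assert (HE0 : Ee 0%nat = 0).
  { pose proof (J_rec0 L HL). pose proof (pJ_rec0 L HL). rewrite I_val in H by auto.
    simpl in H. rewrite Rmult_1_l in H.
    assert (cc L * Ee 0%nat - Ee 1%nat = 0) by (unfold Ee; lra).
    rewrite (Hg 1%nat) in H1. simpl in H1. apply (Rmult_eq_reg_l (ss L)); [|lra]. lra. }
  assert (Ee n = 0) by (rewrite Hg, HE0; ring). unfold Ee in H. lra.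
Qed.

Definition k1 L := c1_speed L * (ss L / (2 * PI * L)).
Definition k2 L := / 2 * (ss L / (2 * PI * L)) ^ 2.

Lemma chi_eq L t : 0 < L -> chi L t = k1 L * PP L t + k2 L * PP L t ^ 2.
Proof. intro HL. unfold chi, k1, k2. rewrite Gy1_eq by auto. ring. Qed.

Lemma c1_val L : 0 < L -> c1_speed L = - / (4 * PI * L) * (cosh (1 / L) / sinh (1 / L)).
Proof. intro HL. unfold c1_speed.
  assert (Derive (fun y => Hext L 0 y) 0 = / (4 * PI * L) * (cosh (1 / L) / sinh (1 / L))) by (apply is_derive_unique; apply Hext_deriv; auto).
  rewrite H. ring. Qed.

Lemma odd_int (h : R -> R) A : (forall t, continuous h t) -> (forall t, h (- t) = - h t) ->
  RInt h (- A) A = 0.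
Proof.
  intros Hc Ho.
  assert (Hex : ex_RInt h (- A) A) by (apply (@ex_RInt_continuous R_CompleteNormedModule); auto).
  pose proof (@RInt_correct R_CompleteNormedModule h (- A) A Hex) as Hi.
  rewrite <- (Ropp_involutive A) in Hi at 2.
  pose proof (@is_RInt_comp_opp R_NormedModule h A (- A) _ Hi) as Hj.
  assert (Hk : is_RInt h A (- A) (RInt h (- A) A)).
  { apply (is_RInt_ext (fun y => opp (h (- y)))); auto. intros. unfold opp; simpl. rewrite Ho. ring. }
  apply (@is_RInt_unique R_CompleteNormedModule) in Hk.
  rewrite <- (@opp_RInt_swap R_CompleteNormedModule) in Hk by auto.
  unfold opp in Hk; simpl in Hk. lra.
Qed.

Lemma PP_even L t : PP L (- t) = PP L t.
Proof. unfold PP. replace (- t / L) with (- (t / L)) by (unfold Rdiv; ring). rewrite cos_neg. reflexivity. Qed.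

Lemma chi_cont L m t : 0 < L -> continuous (fun t => k1 L * PP L t + k2 L * PP L t ^ 2 - m) t.
Proof. intro HL. apply cont_of_deriv. unfold PP. pose proof (cc_cos_pos L t HL).
  auto_derive. lra.
Qed.

Lemma fsin_zero L m n : 0 < L -> fsin L (fun t => chi L t - m) n = 0.
Proof.
  intro HL. unfold fsin.
  replace (- PI * L) with (- (PI * L)) by ring.
  rewrite (RInt_ext _ (fun t => (k1 L * PP L t + k2 L * PP L t ^ 2 - m) * sin (INR n * t / L))).
  2:{ intros. rewrite chi_eq; auto. }
  rewrite odd_int. ring.
  - intros. apply cont_mult. apply chi_cont; auto. apply sinn_cont.
  - intros. rewrite !PP_even. replace (INR n * - t / L) with (- (INR n * t / L)) by (unfold Rdiv; ring).
    rewrite sin_neg. ring.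
Qed.

Lemma lin3 (f g h : R -> R) a b x y z : ex_RInt f a b -> ex_RInt g a b -> ex_RInt h a b ->
  RInt (fun t => x * f t + y * g t - z * h t) a b = x * RInt f a b + y * RInt g a b - z * RInt h a b.
Proof.
  intros Hf Hg Hh.
  rewrite (RInt_ext _ (fun t => minus (plus (scal x (f t)) (scal y (g t))) (scal z (h t)))).
  2:{ intros. unfold minus, plus, scal, opp; simpl; unfold mult; simpl. ring. }
  rewrite (@RInt_minus R_CompleteNormedModule), (@RInt_plus R_CompleteNormedModule), !(@RInt_scal R_CompleteNormedModule); auto.
  - apply (@ex_RInt_scal R_CompleteNormedModule); auto.
  - apply (@ex_RInt_scal R_CompleteNormedModule); auto.
  - apply (@ex_RInt_plus R_CompleteNormedModule); apply (@ex_RInt_scal R_CompleteNormedModule); auto.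
  - apply (@ex_RInt_scal R_CompleteNormedModule); auto.
Qed.

Lemma fcos_val L m k : 0 < L ->
  fcos L (fun t => chi L t - m) (S k) = INR (S k) * (/ exp (/ L)) ^ (S k) / (4 * PI ^ 2 * L ^ 2).
Proof.
  intro HL. unfold fcos.
  rewrite (RInt_ext _ (fun t => k1 L * (PP L t * cos (INR (S k) * t / L)) +
      k2 L * (PP L t ^ 2 * cos (INR (S k) * t / L)) - m * cos (INR (S k) * t / L))).
  2:{ intros. rewrite chi_eq by auto. match goal with |- ?a = ?b => change (@eq R a b) end. ring. }
  rewrite lin3.
  - fold (W L (PP L) (S k)). fold (W L (fun t => PP L t ^ 2) (S k)).
    fold (Iseq L (S k)). fold (Jseq L (S k)). rewrite cosintS by auto.
    rewrite I_val, J_val by auto. unfold pJ, k1, k2. rewrite c1_val by auto.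
    fold (cc L). fold (ss L).
    pose proof (ss_pos L HL). pose proof PI_RGT_0.
    set (Q := / exp (/ L)). set (N := INR (S k)).
    field. repeat split; lra.
  - apply exW. intro; apply PP_cont; auto.
  - apply exW. intro; apply PP2_cont; auto.
  - apply (@ex_RInt_continuous R_CompleteNormedModule). intros; apply cosn_cont.
Qed.

Lemma exp_INR n x : exp (INR n * x) = exp x ^ n.
Proof. induction n. simpl. rewrite Rmult_0_l. apply exp_0.
  rewrite S_INR, Rmult_plus_distr_r, exp_plus, IHn, Rmult_1_l. simpl. ring. Qed.

Theorem proposition6p2 (L g alpha2 : R) (hL : 0 < L) (hg : 0 < g) (ha : 0 < alpha2) :
  is_derive (fun y => Hext L 0 y) 0 (/ (4 * PI * L) * (cosh (1 / L) / sinh (1 / L))) /\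
  c1_speed L = - / (4 * PI * L) * (cosh (1 / L) / sinh (1 / L)) /\
  forall x : R,
    eta_star L g alpha2 x =
      - / (4 * PI ^ 2) *
        Series (fun n => INR n / (g * L ^ 2 + alpha2 * INR n ^ 2)
                         * exp (- INR n / L) * cos (INR n * x / L)).
Proof.
  split. apply Hext_deriv; auto.
  split. apply c1_val; auto.
  intro x. unfold eta_star. cbv zeta. unfold invOp.
  match goal with |- _ = - / ?a * Series ?u => replace (- / a * Series u) with (- (/ a * Series u)) by ring end.
  rewrite <- Series_scal_l. f_equal. apply Series_ext. intro n. destruct n.
  - cbn [Nat.eqb]. replace (INR 0) with 0 by reflexivity. unfold Rdiv. ring.
  - cbn [Nat.eqb]. rewrite fcos_val, fsin_zero by auto.
    replace (- INR (S n) / L) with (INR (S n) * (- / L)) by (unfold Rdiv; ring).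
    rewrite exp_INR, exp_Ropp.
    pose proof PI_RGT_0. pose proof (pos_INR n). assert (HN : 0 < INR (S n)) by (rewrite S_INR; lra).
    set (N := INR (S n)). set (Q := / exp (/ L)).
    assert (0 < g * L ^ 2 + alpha2 * N ^ 2) by (assert (0 < L^2) by (apply pow_lt; lra); assert (0 < N^2) by (apply pow_lt; unfold N; lra); apply Rplus_lt_0_compat; apply Rmult_lt_0_compat; lra).
    field. repeat split; try lra; try nra.
Qed.
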